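(* Let $G$ be a finite simple chordal graph. The following are equivalent: (i) $\gamma(G)=\alpha(G)$; (ii) $G$ is well-covered; (iii) $G$ is well-dominated; (iv) $V(G)$ is the disjoint union of maximal cliques of $G$ each of which contains a free vertex.
   Context: A dominating set of $G$ is a set $D\subseteq V(G)$ such that every vertex lies in $D$ or is adjacent to a vertex of $D$; $\gamma(G)$ is the minimum size of a dominating set, and $G$ is well-dominated if all minimal (under inclusion) dominating sets have the same size. $\alpha(G)$ is the maximum size of an independent set; $G$ is well-covered if all maximal independent sets have the same size. A clique is a set of pairwise adjacent vertices; a free vertex is a vertex belonging to exactly one maximal clique. A graph is chordal if every cycle of length at least $4$ has a chord. *)

(* Defs.v *)
From mathcomp Require Import all_boot.
Set Implicit Arguments. Unset Strict Implicit. Unset Printing Implicit Defensive.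

Definition simple_graph (T : finType) (e : rel T) : Prop :=
  symmetric e /\ irreflexive e.

Section Graph.
Variables (T : finType) (e : rel T).

Definition dominating (D : {set T}) : bool :=
  [forall x, (x \in D) || [exists y in D, e x y]].

Definition independent (S : {set T}) : bool :=
  [forall x in S, forall y in S, ~~ e x y].

Definition clique (K : {set T}) : bool :=
  [forall x in K, forall y in K, (x != y) ==> e x y].

(* gamma(G): minimum size of a dominating set (setT always dominates). *)
Definition domination_number : nat :=
  \big[minn/#|T|]_(D : {set T} | dominating D) #|D|.

Definition independence_number : nat :=
  \max_(S : {set T} | independent S) #|S|.

Definition well_covered : Prop :=
  forall S1 S2 : {set T}, maxset independent S1 -> maxset independent S2 ->
    #|S1| = #|S2|.

Definition well_dominated : Prop :=
  forall D1 D2 : {set T}, minset dominating D1 -> minset dominating D2 ->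
    #|D1| = #|D2|.

Definition maximal_clique (K : {set T}) : bool := maxset clique K.

Definition free_vertex (v : T) : bool :=
  #|[set K : {set T} | maximal_clique K & v \in K]| == 1.

(* chordal: every cycle of length >= 4 (given as a duplicate-free sequence
   of vertices, consecutive ones adjacent, last adjacent to first) has a chord,
   i.e. an edge between two vertices not consecutive on the cycle. *)
Definition chordal : Prop :=
  forall s : seq T, uniq s -> 4 <= size s -> cycle e s ->
    exists x0 : T, exists i j : nat,
      [/\ i < j < size s, j != i.+1, ~~ ((i == 0) && (j == (size s).-1))
        & e (nth x0 s i) (nth x0 s j)].

End Graph.

(* Main.v *)
Require Import Defs.
From mathcomp Require Import all_boot zify.
Set Implicit Arguments. Unset Strict Implicit. Unset Printing Implicit Defensive.


Section G.
Variables (T : finType) (e : rel T).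
Hypothesis esym : symmetric e.
Hypothesis eirr : irreflexive e.
Hypothesis chord : chordal e.

Lemma c4 a b c d : e a b -> e b c -> e c d -> e d a -> ~~ e a c -> ~~ e b d ->
  a != c -> b != d -> False.
Proof.
move=> ab bc cd da nac nbd neac nebd.
have neab : a != b by apply: contraTneq ab => ->; rewrite eirr.
have nebc : b != c by apply: contraTneq bc => ->; rewrite eirr.
have necd : c != d by apply: contraTneq cd => ->; rewrite eirr.
have nead : a != d by apply: contraTneq da => ->; rewrite eirr.
have := chord (s := [:: a; b; c; d]).
case.
- rewrite /= !inE !negb_or neab neac nead nebc nebd necd //.
- by [].
- by rewrite /= ab bc cd da.
move=> x0 [i [j [hij hne hn hch]]].
move: hij hne hn hch; rewrite /=.
case: i => [|[|[|[|i]]]]; case: j => [|[|[|[|j]]]] //=; try by move=> *; lia.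
all: idtac.


Qed.
End G.


Section S.
Variables (T : finType) (e : rel T).

Lemma sc_size (q : seq T) a b : a.+1 < b < size q ->
  size (take a.+1 q ++ drop b q) = a.+1 + (size q - b).
Proof. move=> h; rewrite size_cat size_drop size_takel //; lia. Qed.

Lemma sc_nth x0 (q : seq T) a b k : a.+1 < b < size q ->
  nth x0 (take a.+1 q ++ drop b q) k =
  nth x0 q (if k <= a then k else b + (k - a.+1)).
Proof.
move=> h; rewrite nth_cat size_takel; last by lia.
case: ifP => hk.
- by rewrite ifT ?nth_take //; lia.
- by rewrite ifF ?nth_drop //; lia.
Qed.

Lemma sc_subseq (q : seq T) a b : a.+1 < b ->
  subseq (take a.+1 q ++ drop b q) q.
Proof.
move=> h; have := cat_subseq (take_subseq (take b q) a.+1) (subseq_refl (drop b q)).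
by rewrite cat_take_drop take_takel //; lia.
Qed.

Lemma sc_sorted x0 (q : seq T) a b : a.+1 < b < size q ->
  e (nth x0 q a) (nth x0 q b) -> sorted e q ->
  sorted e (take a.+1 q ++ drop b q).
Proof.
move=> h hab /(sortedP x0) hs; apply/(sortedP x0) => k.
rewrite sc_size // => hk; rewrite !sc_nth //.
case: (ltngtP k a) => hka.
- apply: hs; lia.
- have -> : b + (k.+1 - a.+1) = (b + (k - a.+1)).+1 by lia.
  apply: hs; lia.
- subst k; rewrite subnn addn0 //.
Qed.
End S.


Section S.
Variables (T : finType) (e : rel T).
Hypothesis esym : symmetric e.
Hypothesis eirr : irreflexive e.
Hypothesis chord : chordal e.

Lemma sep w (q : seq T) : uniq q -> sorted e q -> 1 < size q ->
  e w (nth w q 0) -> e w (nth w q (size q).-1) ->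
  ~~ e (nth w q 0) (nth w q (size q).-1) ->
  (forall z, z \in q -> z != nth w q 0 -> z != nth w q (size q).-1 ->
     (z != w) && ~~ e w z) -> False.
Proof.
move: {2}(size q) (leqnn (size q)) => n; elim: n q => [|n IH] q hn.
  by move=> _ _ h; lia.
move=> uq sq s2 ew1 ew2 ne hint.
have [s2'|s3] := eqVneq (size q) 2.
  move/(sortedP w): sq => hs; have := hs 0; rewrite s2' => /(_ isT) h.
  by move: ne; rewrite s2' /= h.
have s3' : 2 < size q by lia.
have wnq : w \notin q.
  apply/negP => wq.
  have h1 : w != nth w q 0 by apply: contraTneq ew1 => <-; rewrite eirr.
  have h2 : w != nth w q (size q).-1 by apply: contraTneq ew2 => <-; rewrite eirr.
  by have := hint w wq h1 h2; rewrite eqxx.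
have := chord (s := w :: q).
case.
- by rewrite cons_uniq wnq uq.
- by rewrite /=; lia.
- case: q hn uq sq s2 ew1 ew2 ne hint wnq s3 s3' => [//|x q0] /= hn uq sq s2 ew1 ew2 ne hint wnq s3 s3'.
  rewrite rcons_path sq ew1 /=.
  by move: ew2; rewrite (nth_last w (x :: q0)) /= esym.
move=> x0 [i [j [hij hne hn0 hch]]].
case: i hij hne hn0 hch => [|i'] hij hne hn0 hch.
- case: j hij hne hn0 hch => [|j'] //= hij hne hn0 hch.
  set z := nth x0 q j' in hch.
  have hj : j' < size q by lia.
  have zq : z \in q by apply: mem_nth.
  have zd : z = nth w q j' by apply: set_nth_default.
  have sq0 : 0 < size q by apply: leq_ltn_trans hj.
  have h1 : z != nth w q 0 by rewrite zd nth_uniq.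
  have h2 : z != nth w q (size q).-1.
    rewrite zd nth_uniq //; last by rewrite prednK.
    by move: hn0; apply: contra => /eqP ->; rewrite prednK.
  by move: (hint z zq h1 h2) => /andP[_]; rewrite hch.
- case: j hij hne hn0 hch => [|j'] //= hij hne hn0 hch.
  have hi : i' < size q by lia.
  have hj : j' < size q by lia.
  rewrite (set_nth_default w) // (set_nth_default w _ hj) in hch.
  have [hend|hend] := boolP ((i' == 0) && (j' == (size q).-1)).
    by move/andP: hend => [/eqP e1 /eqP e2]; move: ne; rewrite -e1 -e2 hch.
  have hab : i'.+1 < j' < size q by lia.
  have hij2 : i'.+1 < j' by lia.
  set q' := take i'.+1 q ++ drop j' q.
  have sq' : size q' = i'.+1 + (size q - j') by apply: sc_size.
  have e0 : nth w q' 0 = nth w q 0 by rewrite /q' sc_nth.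
  have e1 : nth w q' (size q').-1 = nth w q (size q).-1.
    rewrite /q' sc_nth // -/q' sq'.
    have -> : (i'.+1 + (size q - j')).-1 <= i' = false by lia.
    congr nth; lia.
  apply: (IH q').
  + rewrite sq'; lia.
  + exact: subseq_uniq (sc_subseq q hij2) uq.
  + exact: sc_sorted hab hch sq.
  + rewrite sq'; lia.
  + by rewrite e0.
  + by rewrite e1.
  + by rewrite e0 e1.
  + move=> z zq'; rewrite e0 e1; apply: hint.
    exact: (mem_subseq (sc_subseq q hij2)).
Qed.
End S.


Section S.
Variables (T : finType) (e : rel T).
Hypothesis esym : symmetric e.
Hypothesis eirr : irreflexive e.
Hypothesis chord : chordal e.

Definition nbU (U : {set T}) v := [set z in U | (z == v) || e v z].

Lemma cliqueP (K : {set T}) :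
  reflect (forall x y, x \in K -> y \in K -> x != y -> e x y) (clique e K).
Proof.
apply: (iffP forallP) => [h x y xK yK nxy|h x].
  by move: (h x); rewrite xK /= => /forallP /(_ y); rewrite yK nxy.
by apply/implyP => xK; apply/forall_inP => y yK; apply/implyP; apply: h.
Qed.

Lemma clique_sub (A B : {set T}) : A \subset B -> clique e B -> clique e A.
Proof.
move=> sAB /cliqueP h; apply/cliqueP => a b aA bA; apply: h; exact: (subsetP sAB).
Qed.

Lemma path_mem (D : {set T}) a p :
  path [rel u v | e u v && (u \in D) && (v \in D)] a p -> {subset p <= D}.
Proof.
elim: p a => [//|b p IH] a /= /andP[/andP[/andP[_ _] bD] hp] z.
rewrite inE.
case/orP=> [/eqP->//|zp]; exact: (IH b hp z zp).
Qed.

Lemma simp n (U : {set T}) : #|U| <= n -> forall x y, x \in U -> y \in U ->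
  x != y -> ~~ e x y ->
  exists2 s, s \in U & [&& s != x, ~~ e x s & clique e (nbU U s)].
Proof.
elim: n U => [|n IH] U hU x y xU yU nxy nexy.
  by move: hU; rewrite leqn0 => /eqP/cards0_eq U0; move: xU; rewrite U0 inE.
pose D := [set z in U | (z != x) && ~~ e x z].
pose eD := [rel a b | e a b && (a \in D) && (b \in D)].
pose C := [set z | connect eD y z].
pose S := [set z in U | (z \notin C) && [exists c in C, e c z]].
pose W := C :|: S.
have inW : forall z, (z \in W) = (z \in C) || (z \in S) by move=> z; rewrite inE.
clearbody W.
have yD : y \in D by rewrite inE yU eq_sym nxy.
have eDsym : symmetric eD.
  by move=> a b /=; rewrite esym; case: (a \in D); case: (b \in D); rewrite ?andbT ?andbF.
have CD : forall z, z \in C -> z \in D.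
  move=> z; rewrite inE => /connectP [p hp ->].
  case/lastP: p hp => [//|p b]; rewrite rcons_path last_rcons /=.
  by case/andP=> _ /andP[/andP[_ _]].
have Cext : forall c d, c \in C -> d \in D -> e c d -> d \in C.
  move=> c d cC dD ecd; rewrite inE; apply: connect_trans (_ : connect eD c d).
    by move: cC; rewrite inE.
  by apply: connect1; rewrite /= ecd dD CD.
have DU : forall z, z \in D -> z \in U by move=> z; rewrite inE => /andP[].
have CU : forall z, z \in C -> z \in U by move=> z /CD /DU.
have SN : forall z, z \in S -> e x z.
  move=> z; rewrite inE => /andP[zU /andP[zC /exists_inP[c cC ecz]]].
  case zD : (z \in D); first by move: zC; rewrite (Cext c z).
  move/negbT: zD; rewrite inE zU /= negb_and negbK => /orP[/eqP zx|/negPn//].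
  move: (CD c cC); rewrite inE -zx.
  rewrite (esym z c) ecz /=.
  by rewrite !andbF.
have Cpath : forall c1 c2, c1 \in C -> c2 \in C -> exists p,
    [/\ path e c1 p, uniq (c1 :: p), last c1 p = c2 & {subset p <= D}].
  move=> c1 c2 c1C c2C.
  have : connect eD c1 c2.
    apply: (connect_trans (y := y)).
      by rewrite (sym_connect_sym eDsym); move: c1C; rewrite inE.
    by move: c2C; rewrite inE.
  case/connectP => p hp ->.
  case: (shortenP hp) => p' hp' up' _.
  exists p'; split=> //; first by apply: sub_path hp' => a b /= /andP[/andP[]].
  exact: path_mem hp'.
have Sclique : forall s1 s2, s1 \in S -> s2 \in S -> s1 != s2 -> e s1 s2.
  move=> s1 s2 s1S s2S ns; apply/negPn/negP => nes.
  have xs1 := SN s1 s1S; have xs2 := SN s2 s2S.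
  have s1D : s1 \notin D by rewrite inE xs1 !andbF.
  have s2D : s2 \notin D by rewrite inE xs2 !andbF.
  move: (s1S) (s2S); rewrite !inE => /and3P[_ _ /exists_inP[c1 c1C ec1]].
  move=> /and3P[_ _ /exists_inP[c2 c2C ec2]].
  have [p [hp up lp pD]] := Cpath c1 c2 c1C c2C.
  have c1pD : {subset c1 :: p <= D}.
    by move=> z; rewrite inE => /orP[/eqP->|/pD//]; apply: CD.
  pose q := s1 :: rcons (c1 :: p) s2.
  have hl : nth x q (size q).-1 = s2 by rewrite nth_last /q /= last_rcons.
  apply: (sep esym eirr chord (w := x) (q := q)).
  - rewrite /q cons_uniq rcons_uniq up andbT mem_rcons inE negb_or ns /=.
    apply/andP; split; apply/negP => /c1pD; apply/negP => //.
  - by rewrite /q /= rcons_path /= hp lp ec2 andbT esym ec1.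
  - by rewrite /q /= size_rcons.
  - by [].
  - by rewrite hl.
  - by rewrite hl /=.
  - move=> z; rewrite hl /= inE => /orP[/eqP->|]; first by rewrite eqxx.
    rewrite mem_rcons inE => /orP[/eqP->|zp]; first by rewrite eqxx.
    by move=> _ _; move: (c1pD z zp); rewrite inE => /andP[_].
have xD : x \notin D by rewrite inE eqxx andbF.
have xW : x \notin W.
  rewrite inW negb_or; apply/andP; split; first by apply: contra xD; apply: CD.
  by apply/negP => /SN; rewrite eirr.
have WU : W \subset U.
  apply/subsetP => z; rewrite inW => /orP[/CU//|]; by rewrite inE => /andP[].
have cardW : #|W| <= n.
  have : #|W| <= #|U :\ x|.
    apply: subset_leq_card; apply/subsetP => z zW.
    rewrite !inE (subsetP WU z zW) andbT; by apply: contraNneq xW => <-.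
  move: hU; rewrite (cardsD1 x U) xU; lia.
have nbC : forall c z, c \in C -> z \in U -> e c z -> z \in W.
  move=> c z cC zU ecz; rewrite inW; case zC: (z \in C) => //=.
  by rewrite inE zU zC /=; apply/exists_inP; exists c.
have toU : forall s, s \in C -> clique e (nbU W s) -> clique e (nbU U s).
  move=> s sC; apply: clique_sub; apply/subsetP => z; rewrite /nbU !inE => /andP[zU hz].
  rewrite hz andbT; case/orP: hz => [/eqP->|esz]; first by rewrite inW sC.
  exact: (nbC s z sC zU esz).
have fin : forall s, s \in C -> clique e (nbU W s) ->
    exists2 s, s \in U & [&& s != x, ~~ e x s & clique e (nbU U s)].
  move=> s sC cs; exists s; first exact: CU.
  by move: (CD s sC); rewrite inE => /and3P[_ -> ->]; rewrite toU.
case: (boolP (clique e W)) => [Wc|Wnc].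
  apply: (fin y); first by rewrite inE connect0.
  by apply: clique_sub Wc; apply/subsetP => z; rewrite inE => /andP[].
have [z1 [z2 [z1W z2W nz nez]]] :
    exists z1 z2, [/\ z1 \in W, z2 \in W, z1 != z2 & ~~ e z1 z2].
  case: (boolP [exists z1, exists z2, [&& z1 \in W, z2 \in W, z1 != z2 & ~~ e z1 z2]]).
    by move=> /existsP[z1 /existsP[z2 /and4P[h1 h2 h3 h4]]]; exists z1, z2.
  move=> hn; exfalso; move/negP: Wnc; apply; apply/cliqueP => a b aW bW nab.
  apply/negPn/negP => neab; move/negP: hn; apply; apply/existsP; exists a.
  by apply/existsP; exists b; rewrite aW bW nab neab.
have SW : forall z, z \in S -> z \in W by move=> z zS; rewrite inW zS orbT.
case: (boolP [exists z, exists z', [&& z \in S, z' \in W, z' != z & ~~ e z z']]).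
  move=> /existsP[z /existsP[z' /and4P[zS z'W nz' nez']]].
  have nz'' : z != z' by rewrite eq_sym.
  have [s sW /and3P[nsz nezs cs]] := IH W cardW z z' (SW z zS) z'W nz'' nez'.
  move: sW; rewrite inW => /orP[sC|sS]; first exact: (fin s sC cs).
  by move: (Sclique s z sS zS nsz); rewrite esym (negbTE nezs).
move=> hn.
have [s sW /and3P[nsz nezs cs]] := IH W cardW z1 z2 z1W z2W nz nez.
move: sW; rewrite inW => /orP[sC|sS]; first exact: (fin s sC cs).
exfalso; move/negP: hn; apply; apply/existsP; exists s; apply/existsP; exists z1.
by rewrite sS z1W eq_sym nsz esym nezs.
Qed.
End S.


Section S.
Variables (T : finType) (e : rel T).
Hypothesis esym : symmetric e.
Hypothesis eirr : irreflexive e.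
Hypothesis chord : chordal e.

Local Notation nbU := (nbU e).

Lemma independentP (S : {set T}) :
  reflect (forall x y, x \in S -> y \in S -> ~~ e x y) (independent e S).
Proof.
apply: (iffP forallP) => [h x y xS yS|h x].
  by move: (h x); rewrite xS /= => /forallP /(_ y); rewrite yS.
by apply/implyP => xS; apply/forall_inP => y yS; apply: h.
Qed.

Lemma indep_sub (A B : {set T}) : A \subset B -> independent e B -> independent e A.
Proof.
move=> sAB /independentP h; apply/independentP => a b aA bA; apply: h; exact: (subsetP sAB).
Qed.

Lemma indepU1 a (S : {set T}) : independent e S -> (forall s, s \in S -> ~~ e a s) ->
  independent e (a |: S).
Proof.
move=> /independentP hS ha; apply/independentP => x y; rewrite !inE.
case/orP=> [/eqP->|xS]; case/orP=> [/eqP->|yS]; rewrite ?eirr //; first exact: ha.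
by rewrite esym; apply: ha.
by apply: hS.
Qed.

Definition mis (U S : {set T}) :=
  [&& S \subset U, independent e S & [forall y in U, (y \in S) || [exists s in S, e y s]]].

Definition wcU (U : {set T}) := forall S1 S2, mis U S1 -> mis U S2 -> #|S1| = #|S2|.

Lemma misP (U S : {set T}) : reflect [/\ S \subset U, independent e S &
   forall y, y \in U -> y \notin S -> exists2 s, s \in S & e y s] (mis U S).
Proof.
apply: (iffP and3P) => [[h1 h2 /forall_inP h3]|[h1 h2 h3]]; split=> //.
  by move=> y yU yS; move: (h3 y yU); rewrite (negbTE yS) => /exists_inP.
apply/forall_inP => y yU; case yS: (y \in S) => //=.
by apply/exists_inP; apply: h3; rewrite ?yS.
Qed.

Lemma mis_ext (U S : {set T}) : S \subset U -> independent e S -> exists2 S' : {set T}, S \subset S' & mis U S'.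
Proof.
move=> sSU iS.
have [M /maxsetP [/andP[MU iM] mx] sSM] :=
  @maxset_exists _ (fun X => (X \subset U) && independent e X) S (introT andP (conj sSU iS)).
exists M => //; apply/misP; split=> // y yU yM.
case: (boolP [exists s in M, e y s]) => [/exists_inP[s ? ?]|hn]; first by exists s.
exfalso; move/negP: yM; apply.
have <- : y |: M = M.
  apply: mx; last exact: subsetUr.
  rewrite subUset sub1set yU MU /=; apply: indepU1 => // s sM.
  by apply/negP => ys; move/negP: hn; apply; apply/exists_inP; exists s.
by rewrite setU11.
Qed.

Lemma exch (U M W : {set T}) : wcU U -> mis U M -> W \subset U -> independent e W ->
  #|M| < #|W| -> False.
Proof.
move=> wc hM sWU iW lt.
have [S' sWS' hS'] := mis_ext sWU iW.
move: (wc _ _ hM hS') (subset_leq_card sWS'); lia.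
Qed.

Lemma mis_R (U : {set T}) v (S : {set T}) : v \in U -> mis (U :\: nbU U v) S -> mis U (v |: S).
Proof.
move=> vU /misP [sSR iS hS]; apply/misP; split.
- rewrite subUset sub1set vU; apply: subset_trans sSR _; exact: subsetDl.
- apply: indepU1 => // s sS; move: (subsetP sSR s sS); rewrite /nbU !inE.
  by case: (e v s); rewrite ?orbT ?andbT //=; case: (s \in U).
- move=> y yU; rewrite inE negb_or => /andP[yv yS].
  case yR: (y \in U :\: nbU U v).
    by have [s sS eys] := hS y yR yS; exists s; rewrite ?inE ?sS ?orbT.
  exists v; first by rewrite setU11.
  move: yR; rewrite /nbU !inE yU /= andbT.
  move/negbT; rewrite negbK => /orP[/eqP yv'|]; last by rewrite esym.
  by rewrite yv' inE eqxx in yv.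
Qed.

Lemma wc_R (U : {set T}) v : v \in U -> wcU U -> wcU (U :\: nbU U v).
Proof.
move=> vU wc S1 S2 h1 h2.
have vS : forall S, mis (U :\: nbU U v) S -> v \notin S.
  move=> S /misP[sS _ _]; apply/negP => /(subsetP sS); rewrite !inE eqxx /=.
  by rewrite andbT; case: (v \in U).
move: (wc _ _ (mis_R vU h1) (mis_R vU h2)); rewrite !cardsU1 (vS _ h1) (vS _ h2).
by move=> [].
Qed.

End S.


Section S.
Variables (T : finType) (e : rel T).
Hypothesis esym : symmetric e.
Hypothesis eirr : irreflexive e.
Hypothesis chord : chordal e.

Local Notation nbU := (nbU e).
Local Notation mis := (mis e).
Local Notation wcU := (wcU e).

Lemma simp0 (U : {set T}) : U != set0 -> exists2 t, t \in U & clique e (nbU U t).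
Proof.
move=> /set0Pn [x xU].
case: (boolP (clique e U)) => [cU|nU].
  by exists x => //; apply: clique_sub cU; apply/subsetP => z; rewrite inE => /andP[].
have [z1 [z2 [z1U z2U nz nez]]] :
    exists z1 z2, [/\ z1 \in U, z2 \in U, z1 != z2 & ~~ e z1 z2].
  case: (boolP [exists z1, exists z2, [&& z1 \in U, z2 \in U, z1 != z2 & ~~ e z1 z2]]).
    by move=> /existsP[z1 /existsP[z2 /and4P[h1 h2 h3 h4]]]; exists z1, z2.
  move=> hn; exfalso; move/negP: nU; apply; apply/cliqueP => a b aW bW nab.
  apply/negPn/negP => neab; move/negP: hn; apply; apply/existsP; exists a.
  by apply/existsP; exists b; rewrite aW bW nab neab.
have [s sU /and3P[_ _ cs]] := simp esym eirr chord (leqnn #|U|) z1U z2U nz nez.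
by exists s.
Qed.

Lemma part0 : partition (set0 : {set {set T}}) set0.
Proof.
apply/and3P; split.
- by rewrite /cover big_set0.
- by rewrite /trivIset /cover !big_set0 cards0.
- by rewrite inE.
Qed.

Lemma good_lemma (U K U' : {set T}) (t : T) n
  (IH : forall V : {set T}, #|V| <= n -> wcU V -> exists P : {set {set T}}, partition P V /\
    forall R, R \in P -> clique e R /\ exists2 v, v \in R & nbU V v = R)
  (hU : #|U| <= n.+1) (wc : wcU U) (tU : t \in U)
  (inK : forall z, (z \in K) = (z \in U) && ((z == t) || e t z)) (cK : clique e K)
  (inU' : forall z, (z \in U') = (z \notin K) && (z \in U))
  (Q : {set T}) (QU' : Q \subset U') (cQ : clique e Q) (q : T) (qQ : q \in Q)
  (nq : nbU U' q = Q) :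
  exists2 v, v \in Q & nbU U v = Q.
Proof.
have cKP : forall x y, x \in K -> y \in K -> x != y -> e x y by apply/cliqueP.
have cQP : forall x y, x \in Q -> y \in Q -> x != y -> e x y by apply/cliqueP.
have U'U : forall z, z \in U' -> z \in U by move=> z; rewrite inU' => /andP[].
have U'K : forall z, z \in U' -> z \notin K by move=> z; rewrite inU' => /andP[].
have nK : forall z, z \in U' -> ~~ e t z.
  move=> z zU'; apply: contra (U'K z zU') => etz; by rewrite inK (U'U z zU') etz orbT.
have KU : forall z, z \in K -> z \in U by move=> z; rewrite inK => /andP[].
have tK : t \in K by rewrite inK tU eqxx.
have tU' : t \notin U' by rewrite inU' tK.
have QU : forall z, z \in Q -> z \in U' by move=> z; apply: (subsetP QU').
pose F := [set f in Q | nbU U' f == Q].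
have qF : q \in F by rewrite inE qQ nq eqxx.
have FQ : forall f, f \in F -> f \in Q /\ nbU U' f = Q.
  by move=> f; rewrite inE => /andP[? /eqP].
case: (boolP [exists f in F, [forall k in K, ~~ e f k]]) => [/exists_inP[f fF /forall_inP hk]|hbad].
  have [fQ nf] := FQ f fF; exists f => //; rewrite -nf; apply/setP => z.
  rewrite /nbU !inE inU'; case zK: (z \in K) => //=.
  have -> : (z == f) = false.
    by apply/eqP => zf; move: (U'K f (QU f fQ)); rewrite -zf zK.
  by rewrite (negbTE (hk z zK)) andbF.
have hb : forall f, f \in F -> exists2 k, k \in K & e f k.
  move=> f fF; case: (boolP [exists k in K, e f k]) => [/exists_inP[k ? ?]|hn].
    by exists k.
  exfalso; move/negP: hbad; apply; apply/exists_inP; exists f => //.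
  apply/forall_inP => k kK; apply/negP => efk; move/negP: hn; apply.
  by apply/exists_inP; exists k.
pose NK f := [set k in K | e f k].
have [f0 f0F minf0] : exists2 f0, f0 \in F & (forall f, f \in F -> #|NK f0| <= #|NK f|).
  by case: (arg_minnP (fun f => #|NK f|) qF) => g gF gmin; exists g.
have [u uK ef0u] := hb f0 f0F.
have uF : forall f, f \in F -> e f u.
  move=> f fF; apply/negPn/negP => nfu.
  have nsub : ~~ (NK f \subset NK f0).
    apply/negP => sub.
    have := eqEcard (NK f) (NK f0); rewrite sub (minf0 f fF) /= => /eqP eqN.
    have : u \in NK f0 by rewrite inE uK ef0u.
    by rewrite -eqN inE (negbTE nfu) andbF.
  case/subsetPn: nsub => u2; rewrite !inE => /andP[u2K efu2]; rewrite u2K /= => nf0u2.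
  have [f0Q _] := FQ f0 f0F; have [fQ _] := FQ f fF.
  have nff0 : f != f0 by apply: contraNneq nfu => ->.
  have nuu2 : u != u2 by apply: contraNneq nf0u2 => <-.
  apply: (c4 eirr chord (a := f0) (b := u) (c := u2) (d := f)) => //.
  - exact: (cKP u u2 uK u2K nuu2).
  - by rewrite esym.
  - exact: (cQP f f0 fQ f0Q nff0).
  - by rewrite esym.
  - by apply: contraTneq u2K => <-; apply: U'K; apply: QU.
  - by apply: contraTneq uK => ->; apply: U'K; apply: QU.
have uU := KU u uK.
pose U'' := U :\: nbU U u.
have inU'' : forall z, (z \in U'') = [&& z \in U, z != u & ~~ e u z].
  by move=> z; rewrite !inE; case: (z \in U); rewrite /= ?andbT ?negb_or.
have wc'' : wcU U'' by apply: wc_R.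
have misR : forall S, mis U'' S -> mis U (u |: S) by move=> S; apply: mis_R.
clearbody U''.
have c'' : #|U''| <= n.
  have : #|U''| <= #|U :\ u|.
    apply: subset_leq_card; apply/subsetP => z; rewrite inU'' !inE.
    by case/and3P=> -> -> _.
  move: hU; rewrite (cardsD1 u U) uU; lia.
have [P'' [hP'' hR]] := IH U'' c'' wc''.
case/and3P: hP'' => /eqP cov'' triv'' n0''.
have U''U : forall z, z \in U'' -> z \in U by move=> z; rewrite inU'' => /andP[].
have U''U' : forall z, z \in U'' -> z \in U'.
  move=> z zU''; rewrite inU' (U''U z zU'') andbT; move: zU''; rewrite inU''.
  case/and3P=> _ nzu nuz; apply/negP => zK.
  by move: nuz; rewrite (cKP u z uK zK) // eq_sym.
have FnU'' : forall f, f \in F -> f \notin U''.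
  by move=> f fF; rewrite inU'' esym uF ?andbF.
pose pickf (R : {set T}) := odflt u [pick v in R | nbU U'' v == R].
have hpick : forall R, R \in P'' -> pickf R \in R /\ nbU U'' (pickf R) = R.
  move=> R RP; rewrite /pickf; case: pickP => [v /andP[vR /eqP]|hn] //=.
  exfalso; have [_ [v vR nv]] := hR R RP; move: (hn v); rewrite vR nv eqxx.
  by [].
have RU'' : forall R z, R \in P'' -> z \in R -> z \in U''.
  by move=> R z RP zR; rewrite -cov''; apply/bigcupP; exists R.
have blk : forall R1 R2 z, R1 \in P'' -> R2 \in P'' -> z \in R1 -> z \in R2 -> R1 = R2.
  by move=> R1 R2 z R1P R2P zR1 zR2; rewrite -(def_pblock triv'' R1P zR1) (def_pblock triv'' R2P zR2).
pose Phi := [set pickf R | R in P''].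
have inPhi : forall z, z \in Phi -> exists2 R, R \in P'' & z = pickf R.
  by move=> z /imsetP[R RP ->]; exists R.
have PhiU'' : forall z, z \in Phi -> z \in U''.
  move=> z /inPhi[R RP ->]; have [h _] := hpick R RP; exact: RU'' h.
have hsame : forall psi z R0, psi \in Phi -> R0 \in P'' -> z \in R0 ->
    (z == psi) || e psi z -> psi = pickf R0.
  move=> psi z R0 /inPhi[R RP ->] R0P zR0 hz.
  have [_ nR] := hpick R RP.
  have zR : z \in R by rewrite -nR inE (RU'' R0 z R0P zR0) hz.
  by rewrite (blk R R0 z RP R0P zR zR0).
have iPhi : independent e Phi.
  apply/independentP => x y xP yP; apply/negP => exy.
  have [R2 R2P yd] := inPhi y yP.
  have [h2 _] := hpick R2 R2P.
  have yR2 : y \in R2 by rewrite yd.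
  have ex : x = pickf R2 by apply: (hsame x y R2 xP R2P yR2); rewrite exy orbT.
  by move: exy; rewrite ex -yd eirr.
have misPhi : mis U'' Phi.
  apply/misP; split => //; first by apply/subsetP => z; apply: PhiU''.
  move=> y yU'' yPhi.
  have : y \in cover P'' by rewrite cov''.
  case/bigcupP => R RP yR; have [pR nR] := hpick R RP.
  exists (pickf R); first by apply/imsetP; exists R.
  have : y \in nbU U'' (pickf R) by rewrite nR.
  rewrite inE => /andP[_ /orP[/eqP yd|]]; last by rewrite esym.
  by move: yPhi; rewrite yd; move/negP; case; apply/imsetP; exists R.
have misM := misR Phi misPhi.
have uPhi : u \notin Phi by apply/negP => /PhiU''; rewrite inU'' eqxx andbF.
have tU'' : forall z, z \in U'' -> (z != t) && ~~ e t z.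
  move=> z /U''U' zU'; rewrite nK // andbT; by apply: contraNneq tU' => <-.
have [phi phiPhi phiQ] : exists2 phi, phi \in Phi & phi \in Q.
  case: (boolP [exists phi in Phi, phi \in Q]) => [/exists_inP[phi ? ?]|hn].
    by exists phi.
  exfalso.
  have hnQ : forall z, z \in Phi -> z \notin Q.
    by move=> z zP; apply/negP => zQ; move/negP: hn; apply; apply/exists_inP; exists z.
  apply: (exch esym eirr wc misM (W := t |: (q |: Phi))).
  - rewrite !subUset !sub1set tU (U'U q (QU q qQ)) /=.
    by apply/subsetP => z /PhiU'' /U''U.
  - apply: indepU1 => //.
      apply: indepU1 => // s sP; apply/negP => eqs.
      move/negP: (hnQ s sP); apply; rewrite -nq inE (U''U' s (PhiU'' s sP)) eqs orbT //.
    move=> s; rewrite !inE => /orP[/eqP->|/PhiU'' /U''U' sU']; first exact: nK (QU q qQ).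
    exact: nK.
  - have tn : t \notin q |: Phi.
      rewrite !inE negb_or; apply/andP; split.
        by apply: contraNneq tU' => ->; apply: QU.
      by apply/negP => /PhiU'' /U''U'; apply/negP.
    have qn : q \notin Phi by apply/negP => /hnQ; rewrite qQ.
    by rewrite (cardsU1 u Phi) (cardsU1 t) (cardsU1 q) uPhi tn qn.
have [R0 R0P phid] := inPhi phi phiPhi.
have [phiR0 nphi] := hpick R0 R0P; rewrite -phid in phiR0 nphi.
have phiU'' := PhiU'' phi phiPhi.
have qnU'' := FnU'' q qF.
have qphi : q != phi by apply: contraNneq qnU'' => ->.
have R0Q : R0 \subset Q.
  apply/subsetP => p pR0; apply/negPn/negP => pQ.
  have pU'' := RU'' R0 p R0P pR0.
  have pD : p \notin Phi :\ phi.
    rewrite !inE negb_and negbK; case pP: (p \in Phi); rewrite ?orbT //= orbF.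
    by apply/eqP; rewrite phid; apply: (hsame p p R0 pP R0P pR0); rewrite eqxx.
  have qn : q \notin p |: (Phi :\ phi).
    rewrite !inE !negb_or negb_and; apply/andP; split.
      by apply: contraNneq pQ => <-.
    by apply/orP; right; apply/negP => /PhiU''; apply/negP.
  have tn : t \notin q |: (p |: (Phi :\ phi)).
    rewrite !inE !negb_or negb_and; apply/and3P; split.
    - by apply: contraNneq tU' => ->; apply: QU.
    - by apply: contraNneq tU' => ->; apply: U''U'.
    - by apply/orP; right; apply/negP => /PhiU'' /U''U'; apply/negP.
  apply: (exch esym eirr wc misM (W := t |: (q |: (p |: (Phi :\ phi))))).
  - rewrite !subUset !sub1set tU (U'U q (QU q qQ)) (U''U p pU'') /=.
    by apply/subsetP => z; rewrite inE => /andP[_ /PhiU'' /U''U].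
  - apply: indepU1 => //.
      apply: indepU1 => //.
        apply: (indepU1 esym eirr); first exact: (indep_sub (subsetDl Phi [set phi]) iPhi).
        move=> s; rewrite !inE => /andP[sphi sP]; apply/negP => eps.
        move/negP: sphi; apply; apply/eqP; rewrite phid.
        by apply: (hsame s p R0 sP R0P pR0); rewrite esym eps orbT.
      move=> s; rewrite !inE => /orP[/eqP->|/andP[sphi sP]]; apply/negP => eqs.
        by move/negP: pQ; apply; rewrite -nq inE (U''U' p pU'') eqs orbT.
      have sQ : s \in Q by rewrite -nq inE (U''U' s (PhiU'' s sP)) eqs orbT.
      have eps : e phi s by apply: cQP => //; rewrite eq_sym.
      move/negP: sphi; apply; apply/eqP; rewrite phid.
      by apply: (hsame s s R0 sP R0P); rewrite ?eqxx // -nphi inE (PhiU'' s sP) eps orbT.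
    move=> s; rewrite !inE => /or3P[/eqP->|/eqP->|/andP[_ sP]].
    + exact: nK (QU q qQ).
    + exact: nK (U''U' p pU'').
    + exact: nK (U''U' s (PhiU'' s sP)).
  - rewrite (cardsU1 u Phi) (cardsU1 t) (cardsU1 q) (cardsU1 p) uPhi tn qn pD.
    by rewrite (cardsD1 phi Phi) phiPhi.
have phinF : phi \notin F.
  apply/negP => /uF epu; move: phiU''; rewrite inU'' esym epu.
  by rewrite /= !andbF.
have QsubN : Q \subset nbU U' phi.
  apply/subsetP => z zQ; rewrite inE (QU z zQ) /=.
  case: (eqVneq z phi) => //= zphi.
  by apply: cQP => //; rewrite eq_sym.
have [g gN gQ] : exists2 g, g \in nbU U' phi & g \notin Q.
  apply/subsetPn/negP => sub; move/negP: phinF; apply.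
  by rewrite inE phiQ /= eqEsubset sub QsubN.
move: gN; rewrite inE => /andP[gU' /orP[/eqP gphi|epg]].
  by move: gQ; rewrite gphi phiQ.
have gnU'' : g \notin U''.
  apply/negP => gU''; move/negP: gQ; apply; apply: (subsetP R0Q).
  by rewrite -nphi inE gU'' epg orbT.
have eug : e u g.
  move: gnU''; rewrite inU'' (U'U g gU') /= negb_and negbK => /orP[/eqP gu|/negPn//].
  by move: (U'K g gU'); rewrite gu uK.
exfalso; apply: (c4 eirr chord (a := u) (b := q) (c := phi) (d := g)).
- by rewrite esym; apply: uF.
- exact: cQP.
- exact: epg.
- by rewrite esym.
- by move: phiU''; rewrite inU'' => /and3P[_ _ ->].
- apply/negP => eqg; move/negP: gQ; apply; by rewrite -nq inE gU' eqg orbT.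
- by apply: contraTneq phiU'' => <-; rewrite inU'' eqxx andbF.
- by apply: contraNneq gQ => <-.
Qed.




Lemma ind n (U : {set T}) : #|U| <= n -> wcU U ->
  exists P : {set {set T}}, partition P U /\
    forall Q, Q \in P -> clique e Q /\ exists2 v, v \in Q & nbU U v = Q.
Proof.
elim: n U => [|n IH] U hU wc.
  move: hU; rewrite leqn0 => /eqP/cards0_eq ->; exists set0; split; first exact: part0.
  by move=> Q; rewrite inE.
case: (eqVneq U set0) => [->|U0].
  by exists set0; split; [exact: part0 | move=> Q; rewrite inE].
have [t tU ct] := simp0 U0.
pose K := nbU U t.
have inK : forall z, (z \in K) = (z \in U) && ((z == t) || e t z) by move=> z; rewrite inE.
have cK : clique e K by [].
have Kdef : nbU U t = K by [].
clearbody K.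
have tK : t \in K by rewrite inK tU eqxx.
have KU : K \subset U by apply/subsetP => z; rewrite inK => /andP[].
pose U' := U :\: K.
have inU' : forall z, (z \in U') = (z \notin K) && (z \in U) by move=> z; rewrite inE.
have wc' : wcU U' by rewrite /U' -Kdef; exact: wc_R.
clearbody U'.
have cU' : #|U'| <= n.
  have : #|U'| <= #|U :\ t|.
    apply: subset_leq_card; apply/subsetP => z; rewrite inU' !inE => /andP[zK ->].
    by rewrite andbT; apply: contraNneq zK => ->.
  move: hU; rewrite (cardsD1 t U) tU; lia.
have [P' [hP' hQ']] := IH U' cU' wc'.
have nK : forall z, z \in U' -> ~~ e t z.
  move=> z; rewrite inU' => /andP[zK zU]; apply: contra zK => etz.
  by rewrite inK zU etz orbT.
case/and3P: hP' => /eqP cov triv n0.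
have good : forall Q, Q \in P' -> exists2 v, v \in Q & nbU U v = Q.
  move=> Q QP; have [cQ [q qQ nq]] := hQ' Q QP.
  have QU' : Q \subset U' by rewrite -cov; apply: bigcup_sup.
  exact: (good_lemma IH hU wc tU inK cK inU' QU' cQ qQ nq).
have disj : {in P', forall B : {set T}, [disjoint K & B]}.
  move=> B BP; rewrite disjoints_subset; apply/subsetP => k kK; rewrite inE.
  apply/negP => kB; have : k \in cover P' by apply/bigcupP; exists B.
  by rewrite cov inU' kK.
have [tr KP] := trivIsetU1 disj triv n0.
exists (K |: P'); split.
  apply/and3P; split => //.
  - rewrite /cover big_setU1 //= -/(cover P') cov; apply/eqP/setP => z.
    rewrite inE inU'; case zK: (z \in K) => //=; symmetry; exact: (subsetP KU).
  - rewrite !inE negb_or n0 andbT; apply/negP => /eqP K0; by move: tK; rewrite -K0 inE.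
move=> Q; rewrite !inE => /orP[/eqP->|QP]; first by split => //; exists t.
by split; [case: (hQ' Q QP) | exact: good].
Qed.
End S.


Section S.
Variables (T : finType) (e : rel T).
Hypothesis esym : symmetric e.
Hypothesis eirr : irreflexive e.

Local Notation nbU := (nbU e).
Local Notation mis := (mis e).

Lemma domP (D : {set T}) :
  reflect (forall x, x \in D \/ exists2 y, y \in D & e x y) (dominating e D).
Proof.
apply: (iffP forallP) => [h x|h x].
  by case/orP: (h x) => [|/exists_inP]; [left | right].
by case: (h x) => [->//|/exists_inP ->]; rewrite orbT.
Qed.

Lemma maxset_mis (S : {set T}) : maxset (independent e) S -> mis setT S.
Proof.
case/maxsetP => iS mx; apply/misP; split=> //.
move=> y _ yS.
case: (boolP [exists s in S, e y s]) => [/exists_inP[s ? ?]|hn]; first by exists s.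
exfalso; move/negP: yS; apply.
have <- : y |: S = S.
  apply: mx; last exact: subsetUr.
  apply: indepU1 => // s sS; apply/negP => ys; move/negP: hn; apply.
  by apply/exists_inP; exists s.
by rewrite setU11.
Qed.

Lemma mis_maxset (S : {set T}) : mis setT S -> maxset (independent e) S.
Proof.
case/misP => _ iS hS; apply/maxsetP; split => // B iB sSB.
apply/eqP; rewrite eqEsubset sSB andbT; apply/subsetP => b bB.
apply/negPn/negP => bS; have [s sS ebs] := hS b (in_setT b) bS.
by move/independentP: iB => /(_ b s bB (subsetP sSB s sS)); rewrite ebs.
Qed.

Lemma mis_dom (S : {set T}) : mis setT S -> dominating e S.
Proof.
case/misP => _ _ hS; apply/domP => x; case xS: (x \in S); first by left.
by right; apply: hS; rewrite ?xS.
Qed.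

Lemma wc_iff : well_covered e <-> wcU e setT.
Proof.
split => h S1 S2 h1 h2.
  by apply: h; apply: mis_maxset.
by apply: h; apply: maxset_mis.
Qed.

Lemma mis_exists : exists S, mis setT S.
Proof.
have i0 : independent e (set0 : {set T}) by apply/independentP => x y; rewrite inE.
have [S _ hS] := mis_ext esym eirr (sub0set [set: T]) i0.
by exists S.
Qed.

Definition gam := domination_number e.
Definition alp := independence_number e.

Lemma bigmin_seq (r : seq {set T}) (P : pred {set T}) (F : {set T} -> nat) x0 D0 :
  D0 \in r -> P D0 -> \big[minn/x0]_(i <- r | P i) F i <= F D0.
Proof.
elim: r => [//|a r IH]; rewrite inE big_cons => /orP[/eqP<- ->|Dr PD].
  exact: geq_minl.
case: (P a); last exact: IH.
by apply: leq_trans (geq_minr _ _) (IH Dr PD).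
Qed.

Lemma gam_le (D : {set T}) : dominating e D -> gam <= #|D|.
Proof. by move=> hD; apply: bigmin_seq => //; apply: mem_index_enum. Qed.

Lemma gam_ge k : k <= #|T| -> (forall D, dominating e D -> k <= #|D|) -> k <= gam.
Proof.
move=> hT hD; rewrite /gam /domination_number.
apply: (big_ind (fun m => k <= m)) => //.
  by move=> a b ha hb; rewrite leq_min ha hb.

Qed.

Lemma alp_ge (S : {set T}) : independent e S -> #|S| <= alp.
Proof. by move=> hS; apply: leq_bigmax_cond. Qed.

Lemma alp_le k : (forall S, independent e S -> #|S| <= k) -> alp <= k.
Proof. by move=> h; apply/bigmax_leqP => S; apply: h. Qed.

End S.


Section S.
Variables (T : finType) (e : rel T).
Hypothesis esym : symmetric e.
Hypothesis eirr : irreflexive e.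

Local Notation nbU := (nbU e).
Local Notation mis := (mis e).

Lemma nb_sub (v : T) (Q : {set T}) : nbU setT v = Q ->
  forall B, clique e B -> v \in B -> B \subset Q.
Proof.
move=> hQ B /cliqueP cB vB; apply/subsetP => b bB; rewrite -hQ !inE /=.
case: (eqVneq b v) => //= bv; apply: cB => //; by rewrite eq_sym.
Qed.

Lemma from_ind (P : {set {set T}}) :
  (forall Q, Q \in P -> clique e Q /\ exists2 v, v \in Q & nbU setT v = Q) ->
  forall K, K \in P -> maximal_clique e K /\ exists2 v, v \in K & free_vertex e v.
Proof.
move=> h K KP; have [cK [v vK nv]] := h K KP.
have maxK : maximal_clique e K.
  apply/maxsetP; split => // B cB sKB; apply/eqP; rewrite eqEsubset sKB andbT.
  exact: nb_sub nv B cB (subsetP sKB v vK).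
split => //; exists v => //; rewrite /free_vertex; apply/cards1P; exists K.
apply/setP => M; rewrite !inE; apply/andP/eqP => [[mM vM]|->] //.
have sMK := nb_sub nv (maxsetp mM) vM.
by case/maxsetP: mM => _ /(_ K cK sMK).
Qed.

Lemma free_nb (K : {set T}) v : maximal_clique e K -> v \in K -> free_vertex e v ->
  forall y, e v y -> y \in K.
Proof.
move=> mK vK fv y evy.
have cvy : clique e [set v; y].
  apply/cliqueP => a b; rewrite !inE => /orP[]/eqP-> /orP[]/eqP-> //; rewrite ?eqxx //.
  by rewrite esym.
have [M mM sM] := maxset_exists cvy.
case/cards1P: fv => X hX.
have KX : K \in [set K | maximal_clique e K & v \in K] by rewrite inE mK vK.
have MX : M \in [set K | maximal_clique e K & v \in K].
  by rewrite inE; apply/andP; split => //; apply: (subsetP sM); rewrite !inE eqxx.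
move: KX MX; rewrite hX !inE => /eqP-> /eqP<-.
by apply: (subsetP sM); rewrite !inE eqxx orbT.
Qed.

Variable P : {set {set T}}.
Hypothesis hP : partition P setT.
Hypothesis hK : forall K, K \in P -> maximal_clique e K /\ exists2 v, v \in K & free_vertex e v.

Lemma covP : cover P = setT.
Proof. by case/and3P: hP => /eqP. Qed.

Lemma trivP : trivIset P.
Proof. by case/and3P: hP. Qed.

Lemma blkP x : pblock P x \in P.
Proof. by apply: pblock_mem; rewrite covP. Qed.

Lemma inblk x : x \in pblock P x.
Proof. by rewrite mem_pblock covP. Qed.

Lemma cliqueK K : K \in P -> forall x y, x \in K -> y \in K -> x != y -> e x y.
Proof. by move=> KP; have [/maxsetP[/cliqueP h _] _] := hK KP. Qed.

Lemma dom_ge (D : {set T}) : dominating e D -> #|P| <= #|D|.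
Proof.
move/domP=> hD; apply: leq_trans (leq_imset_card (pblock P) D).
apply: subset_leq_card; apply/subsetP => K KP.
have [mK [v vK fv]] := hK KP.
case: (hD v) => [vD|[y yD evy]].
  by apply/imsetP; exists v => //; rewrite (def_pblock trivP KP vK).
apply/imsetP; exists y => //; rewrite (def_pblock trivP KP _) //.
exact: free_nb mK vK fv y evy.
Qed.

Lemma ind_le (S : {set T}) : independent e S -> #|S| <= #|P|.
Proof.
move/independentP=> iS.
rewrite -(card_in_imset (f := pblock P)).
  apply: subset_leq_card; apply/subsetP => K /imsetP[x _ ->]; exact: blkP.
move=> x y xS yS bxy; apply/eqP; apply/negP => /negP nxy.
have := cliqueK (blkP x) (inblk x) _ nxy; rewrite bxy inblk => /(_ isT) exy.
by move: (iS x y xS yS); rewrite exy.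
Qed.

Lemma mindom_le (D : {set T}) : minset (dominating e) D -> #|D| <= #|P|.
Proof.
case/minsetP => dD mD.
pose privp x p := ((p == x) || e p x) &&
  [forall d in D, (d != x) ==> ~~ ((p == d) || e p d)].
have priv : forall x, x \in D -> exists p, privp x p.
  move=> x xD; have : ~~ dominating e (D :\ x).
    apply/negP => dx; have := mD _ dx (subsetDl D [set x]).
    by move/setP/(_ x); rewrite !inE eqxx xD.
  case/forallPn => p; rewrite negb_or => /andP[pDx /exists_inPn hp].
  exists p; apply/andP; split.
    move/domP: dD => /(_ p) [pD|[y yD epy]].
      by move: pDx; rewrite !inE pD andbT negbK => ->.
    apply/orP; right; case: (eqVneq y x) => [<-//|yx].
    by move: (hp y); rewrite !inE yx yD epy => /(_ isT).
  apply/forall_inP => d dDin; apply/implyP => dx; rewrite negb_or; apply/andP; split.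
    by apply: contra pDx => /eqP->; rewrite !inE dx dDin.
  by move: (hp d); rewrite !inE dx dDin => /(_ isT).
pose pr x := odflt x [pick p | privp x p].
have prP : forall x, x \in D -> privp x (pr x).
  move=> x xD; rewrite /pr; case: pickP => [p //|hn] /=.
  by have [p] := priv x xD; rewrite hn.
rewrite -(card_in_imset (f := fun x => pblock P (pr x))).
  apply: subset_leq_card; apply/subsetP => K /imsetP[x _ ->]; exact: blkP.
move=> x1 x2 x1D x2D /= hb.
set K := pblock P (pr x1) in hb.
have KP : K \in P by apply: blkP.
have [mK [v vK fv]] := hK KP.
have [z zD zK] : exists2 z, z \in D & z \in K.
  move/domP: dD => /(_ v) [vD|[y yD evy]]; first by exists v.
  by exists y => //; apply: free_nb mK vK fv y evy.
have key : forall x, x \in D -> pblock P (pr x) = K -> z = x.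
  move=> x xD hx; have := prP x xD; case/andP => _ /forall_inP /(_ z zD).
  apply: contraTeq => zx; rewrite zx /= negbK.
  have pK : pr x \in K by rewrite -hx inblk.
  case: (eqVneq (pr x) z) => //= pz; exact: cliqueK KP _ _ pK zK pz.
by rewrite -(key x1 x1D) // (key x2 x2D) // -hb.
Qed.

Lemma mis_card (S : {set T}) : mis setT S -> #|S| = #|P|.
Proof.
move=> hS; apply/eqP; rewrite eqn_leq dom_ge ?andbT; last exact: mis_dom.
by apply: ind_le; case/misP: hS.
Qed.

Lemma struct_all :
  [/\ domination_number e = independence_number e, well_covered e & well_dominated e].
Proof.
have [S hS] := mis_exists esym eirr.
have cS := mis_card hS.
split.
- apply/eqP; rewrite eqn_leq; apply/andP; split.
    rewrite -/(gam e); apply: leq_trans (gam_le (mis_dom hS)) _.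
    rewrite -/(alp e); apply: alp_ge; by case/misP: hS.
  rewrite -/(alp e) -/(gam e); apply: alp_le => S' iS'.
  apply: leq_trans (ind_le iS') _; apply: gam_ge.
    have := dom_ge (D := setT) (introT (domP _ _) (fun x => or_introl (in_setT x))).
    by rewrite cardsT.
  by move=> D /dom_ge.
- move=> S1 S2 h1 h2.
  by rewrite (mis_card (maxset_mis esym eirr h1)) (mis_card (maxset_mis esym eirr h2)).
- move=> D1 D2 h1 h2; apply/eqP; rewrite eqn_leq.
  rewrite (leq_trans (mindom_le h1)) ?(leq_trans (mindom_le h2)) //.
    by apply: dom_ge; case/minsetP: h1.
  by apply: dom_ge; case/minsetP: h2.
Qed.

End S.


Lemma maxind_mindom (T : finType) (e : rel T) : symmetric e -> irreflexive e ->
  forall S : {set T}, maxset (independent e) S -> minset (dominating e) S.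
Proof.
move=> esym eirr S hS; have hm := maxset_mis esym eirr hS.
apply/minsetP; split; first exact: mis_dom.
move=> B /domP dB sBS; apply/eqP; rewrite eqEsubset sBS /=; apply/subsetP => x xS.
case: (dB x) => [//|[y yB exy]].
case/misP: hm => _ /independentP iS _.
by move: (iS x y xS (subsetP sBS y yB)); rewrite exy.
Qed.

Theorem corollary4p8 (T : finType) (e : rel T) :
  simple_graph e -> chordal e ->
  [/\ (domination_number e = independence_number e <-> well_covered e),
      (well_covered e <-> well_dominated e)
    & (well_dominated e <->
       exists P : {set {set T}},
         partition P [set: T] /\
         (forall K, K \in P -> maximal_clique e K /\ exists2 v, v \in K & free_vertex e v))].
Proof.
move=> [esym eirr] ch.
have ii_iv : well_covered e -> exists P : {set {set T}},
         partition P [set: T] /\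
         (forall K, K \in P -> maximal_clique e K /\ exists2 v, v \in K & free_vertex e v).
  move/(wc_iff esym eirr) => wc.
  have [P [hP hQ]] := ind esym eirr ch (leqnn #|[set: T]|) wc.
  by exists P; split => //; apply: from_ind.
have iv_all : (exists P : {set {set T}},
         partition P [set: T] /\
         (forall K, K \in P -> maximal_clique e K /\ exists2 v, v \in K & free_vertex e v)) ->
    [/\ domination_number e = independence_number e, well_covered e & well_dominated e].
  by case=> P [hP hK]; exact: (struct_all esym eirr hP hK).
have i_ii : domination_number e = independence_number e -> well_covered e.
  move=> h S1 S2 h1 h2.
  have m1 := maxset_mis esym eirr h1; have m2 := maxset_mis esym eirr h2.
  have k : forall S, mis e setT S -> #|S| = gam e.
    move=> S hS; apply/eqP; rewrite eqn_leq gam_le ?andbT; last exact: mis_dom.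
    rewrite /gam h; apply: alp_ge; by case/misP: hS.
  by rewrite (k _ m1) (k _ m2).
have iii_ii : well_dominated e -> well_covered e.
  by move=> wd S1 S2 h1 h2; apply: wd; apply: maxind_mindom.
split; split.
- exact: i_ii.
- by move/ii_iv/iv_all => [].
- by move/ii_iv/iv_all => [].
- exact: iii_ii.
- by move/iii_ii/ii_iv.
- by move/iv_all => [].
Qed.
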